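(* Let $D\subset\mathbb{C}^k$ be open and let $\varphi,\psi$ be functions on $\mathbb{C}^k$ that are plurisubharmonic on $D$ with $\|\varphi\|_{L^\infty}\leq 1/2$ and $\|\psi\|_{L^\infty}\leq 1/2$. For $j=1,2$ set $\varphi_j^+:=\varphi^2+j\varphi+6$, $\varphi_j^-:=\varphi^2+j\varphi-6$, $\psi_j^+:=\psi^2+j\psi+6$, $\psi_j^-:=-\psi^2-j\psi+6$, and for $j,l\in\{1,2\}$ define on $\mathbb{C}^k\times\mathbb{C}^k$ \[\Phi_{jl}^+(z,w):=\varphi_j^+(z)\psi_l^+(w),\qquad \Phi_{jl}^-(z,w):=\varphi_j^-(z)\psi_l^-(w).\] Then the functions $\Phi_{jl}^\pm$ are all plurisubharmonic on $D\times D$. *)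

(* Defs.v *)
From mathcomp Require Import all_boot all_order all_algebra.
From mathcomp Require Import all_classical all_reals all_analysis.
From mathcomp Require Import complex.
Import Order.TTheory GRing.Theory Num.Theory.
Local Open Scope ring_scope.
Local Open Scope classical_set_scope.

Set Implicit Arguments.
Unset Strict Implicit.
Unset Printing Implicit Defensive.

Definition cabs {R : realType} (z : R[i]) : R :=
  let: Complex a b := z in Num.sqrt (a ^+ 2 + b ^+ 2).

Definition expi {R : realType} (t : R) : R[i] := Complex (cos t) (sin t).

(* max-norm distance on C^k (induces the Euclidean topology) *)
Definition cdist {R : realType} {k : nat} (x y : 'rV[R[i]]_k) : R :=
  \big[Num.max/0]_(j < k) cabs (x ord0 j - y ord0 j).

Definition copen {R : realType} {k : nat} (D : set 'rV[R[i]]_k) : Prop :=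
  forall z, D z -> exists2 d : R, 0 < d & forall w, cdist w z < d -> D w.

Definition usc_on {R : realType} {k : nat} (D : set 'rV[R[i]]_k)
    (u : 'rV[R[i]]_k -> R) : Prop :=
  forall z, D z -> forall e : R, 0 < e ->
    exists2 d : R, 0 < d & forall w, D w -> cdist w z < d -> u w < u z + e.

Definition psh_on {R : realType} {k : nat} (D : set 'rV[R[i]]_k)
    (u : 'rV[R[i]]_k -> R) : Prop :=
  usc_on D u /\
  forall a b : 'rV[R[i]]_k,
    (forall zeta : R[i], cabs zeta <= 1 -> D (a + zeta *: b)) ->
    ((u a)%:E <= ((2 * pi)^-1)%:E *
       \int[lebesgue_measure]_(t in `[0%R, (2 * pi)%R]%classic)
          (u (a + expi t *: b))%:E)%E.

(* D x D as a subset of C^(k+k) = C^k x C^k *)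
Definition prodset {R : realType} {k : nat} (D : set 'rV[R[i]]_k)
  : set 'rV[R[i]]_(k + k) :=
  [set x | D (lsubmx x) /\ D (rsubmx x)].

Definition tensorf {R : realType} {k : nat} (f g : 'rV[R[i]]_k -> R)
  : 'rV[R[i]]_(k + k) -> R :=
  fun x => f (lsubmx x) * g (rsubmx x).

(* Main.v *)
Require Import Defs.
From mathcomp Require Import all_boot all_order all_algebra.
From mathcomp Require Import all_classical all_reals all_analysis.
From mathcomp Require Import complex.
From mathcomp Require Import measurable_realfun.
From mathcomp Require Import ring lra.
Import Order.TTheory GRing.Theory Num.Theory.
Local Open Scope ring_scope.

Section Helpers.
Context {R : realType}.

Lemma bm_le {I : finType} (F : I -> R) y : 0 <= y -> (forall i, F i <= y) ->
  \big[Num.max/0]_(i : I) F i <= y.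
Proof.
move=> y0 hF; apply: (big_ind (fun x => x <= y)) => // a b ha hb.
by rewrite ge_max ha hb.
Qed.

Lemma bm_lt {I : finType} (F : I -> R) y : 0 < y -> (forall i, F i < y) ->
  \big[Num.max/0]_(i : I) F i < y.
Proof.
move=> y0 hF; apply: (big_ind (fun x => x < y)) => // a b ha hb.
by rewrite gt_max ha hb.
Qed.

Lemma bm_ge0 {I : finType} (F : I -> R) : (forall i, 0 <= F i) ->
  0 <= \big[Num.max/0]_(i : I) F i.
Proof.
move=> hF; apply: (big_ind (fun x => 0 <= x)) => // a b ha hb.
by rewrite le_max ha.
Qed.

Lemma bm_ge {I : finType} (F : I -> R) i : F i <= \big[Num.max/0]_(j : I) F j.
Proof.
have : i \in index_enum I by rewrite mem_index_enum.
elim: (index_enum I) => // h s IH.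
rewrite inE big_cons => /orP[/eqP<-|/IH h1]; rewrite le_max ?lexx //.
by rewrite h1 orbT.
Qed.

Lemma cabs_ge0 (z : R[i]) : 0 <= cabs z.
Proof. by case: z => a b; exact: sqrtr_ge0. Qed.

Lemma cabsM (x y : R[i]) : cabs (x * y) = cabs x * cabs y.
Proof. exact: Normc.normcM. Qed.

Lemma cabs_le (u v : R) : cabs (Complex u v) <= `|u| + `|v|.
Proof.
rewrite /cabs [X in _ <= X](_ : _ = Num.sqrt ((`|u| + `|v|) ^+ 2)); last first.
  by rewrite sqrtr_sqr (ger0_norm (addr_ge0 (normr_ge0 u) (normr_ge0 v))).
rewrite ler_sqrt ?sqr_ge0 //.
have hu : u ^+ 2 = `|u| ^+ 2 by rewrite real_normK ?num_real.
have hv : v ^+ 2 = `|v| ^+ 2 by rewrite real_normK ?num_real.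
rewrite sqrrD hu hv.
have : 0 <= `|u| * `|v| *+ 2 by rewrite mulrn_wge0 // mulr_ge0.
lra.
Qed.

Lemma cabs_expi (t : R) : cabs (expi t) = 1.
Proof. by rewrite /cabs /expi cos2Dsin2 sqrtr1. Qed.

Lemma cdist_ge0 {k} (x y : 'rV[R[i]]_k) : 0 <= cdist x y.
Proof. by apply: bm_ge0 => i; exact: cabs_ge0. Qed.

Lemma cdist_l {k} (w x : 'rV[R[i]]_(k + k)) :
  cdist (lsubmx w) (lsubmx x) <= cdist w x.
Proof.
apply: bm_le; first exact: cdist_ge0.
move=> j; rewrite !mxE.
exact: (bm_ge (fun j => cabs (w ord0 j - x ord0 j)) (lshift k j)).
Qed.

Lemma cdist_r {k} (w x : 'rV[R[i]]_(k + k)) :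
  cdist (rsubmx w) (rsubmx x) <= cdist w x.
Proof.
apply: bm_le; first exact: cdist_ge0.
move=> j; rewrite !mxE.
exact: (bm_ge (fun j => cabs (w ord0 j - x ord0 j)) (rshift k j)).
Qed.

Lemma lsub_lin {k} (a b : 'rV[R[i]]_(k + k)) (z : R[i]) :
  lsubmx (a + z *: b) = lsubmx a + z *: lsubmx b.
Proof. by apply/matrixP => i j; rewrite !mxE. Qed.

Lemma rsub_lin {k} (a b : 'rV[R[i]]_(k + k)) (z : R[i]) :
  rsubmx (a + z *: b) = rsubmx a + z *: rsubmx b.
Proof. by apply/matrixP => i j; rewrite !mxE. Qed.

Lemma quad (A B C x y : R) : 19/4 <= A -> 19/4 <= C -> -9 <= B <= 9 ->
  0 <= A * x ^+ 2 + B * (x * y) + C * y ^+ 2.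
Proof.
move=> hA hC /andP[hB1 hB2].
have h1 : 0 <= (A - 19/4) * x ^+ 2 by rewrite mulr_ge0 ?sqr_ge0 // subr_ge0.
have h2 : 0 <= (C - 19/4) * y ^+ 2 by rewrite mulr_ge0 ?sqr_ge0 // subr_ge0.
have h3 : 0 <= (9 + B) * (x + y) ^+ 2 by rewrite mulr_ge0 ?sqr_ge0 //; lra.
have h4 : 0 <= (9 - B) * (x - y) ^+ 2 by rewrite mulr_ge0 ?sqr_ge0 //; lra.
have hx : 0 <= x ^+ 2 by rewrite sqr_ge0.
have hy : 0 <= y ^+ 2 by rewrite sqr_ge0.
rewrite sqrrD in h3; rewrite sqrrB in h4.
lra.
Qed.


Section Poly.
Variables (j l : R).
Hypotheses (j1 : 1 <= j) (j2 : j <= 2) (l1 : 1 <= l) (l2 : l <= 2).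

Lemma qb1 {c s : R} : 1 <= c -> c <= 2 -> -(2^-1) <= s -> s <= 2^-1 ->
  19/4 <= s ^+ 2 + c * s + 6 /\ s ^+ 2 + c * s + 6 <= 29/4.
Proof.
move=> c1 c2 s1 s2.
have h1 : 0 <= c * (s + 2^-1) by rewrite mulr_ge0 //; lra.
have h2 : 0 <= c * (2^-1 - s) by rewrite mulr_ge0 //; lra.
have h3 : 0 <= (s + 2^-1) * (2^-1 - s) by rewrite mulr_ge0 //; lra.
have h4 : 0 <= s ^+ 2 by rewrite sqr_ge0.
rewrite expr2; split; lra.
Qed.

Lemma qb3 {c s : R} : 1 <= c -> c <= 2 -> -(2^-1) <= s -> s <= 2^-1 ->
  0 <= 2 * s + c /\ 2 * s + c <= 3.
Proof. move=> *; split; lra. Qed.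

Lemma prod_bd {a b A B : R} : 0 <= a -> a <= A -> 0 <= b -> b <= B ->
  0 <= a * b /\ a * b <= A * B.
Proof.
move=> a0 aA b0 bB; split; first exact: mulr_ge0.
by apply: ler_pM.
Qed.

Definition Fp (s t : R) := (s ^+ 2 + j * s + 6) * (t ^+ 2 + l * t + 6).
Definition Fps (s t : R) := (2 * s + j) * (t ^+ 2 + l * t + 6).
Definition Fpt (s t : R) := (s ^+ 2 + j * s + 6) * (2 * t + l).
Definition Fm (s t : R) := (s ^+ 2 + j * s - 6) * (- t ^+ 2 - l * t + 6).
Definition Fms (s t : R) := (2 * s + j) * (- t ^+ 2 - l * t + 6).
Definition Fmt (s t : R) := (s ^+ 2 + j * s - 6) * (- (2 * t) - l).

Definition Sq (s : R) := `|s| <= 2^-1.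

Lemma S_bd s : Sq s -> -(2^-1) <= s /\ s <= 2^-1.
Proof. by rewrite /Sq ler_norml => /andP[]. Qed.

Lemma Fp_tan s0 t0 s t : Sq s0 -> Sq t0 -> Sq s -> Sq t ->
  Fp s0 t0 + Fps s0 t0 * (s - s0) + Fpt s0 t0 * (t - t0) <= Fp s t.
Proof.
move=> /S_bd[hs0 hs0'] /S_bd[ht0 ht0'] /S_bd[hs hs'] /S_bd[ht ht'].
have J1 := j1; have J2 := j2; have L1 := l1; have L2 := l2.
rewrite -subr_ge0.
have -> : Fp s t - (Fp s0 t0 + Fps s0 t0 * (s - s0) + Fpt s0 t0 * (t - t0)) =
  (t ^+ 2 + l * t + 6) * (s - s0) ^+ 2 + ((2 * s0 + j) * (t0 + t + l)) * ((s - s0) * (t - t0))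
  + (s0 ^+ 2 + j * s0 + 6) * (t - t0) ^+ 2.
  by rewrite /Fp /Fps /Fpt; ring.
have [c1 c2] : 0 <= t0 + t + l /\ t0 + t + l <= 3 by split; lra.
have [b1 b2] := qb3 j1 j2 hs0 hs0'.
have [d1 d2] := prod_bd b1 b2 c1 c2.
have [a1 _] := qb1 l1 l2 ht ht'.
have [a2 _] := qb1 j1 j2 hs0 hs0'.
have n9 : (3 * 3 : R) = 9 by rewrite -natrM.
apply: quad => //; apply/andP; split.
  by apply: le_trans d1; rewrite oppr_le0.
by rewrite -n9.
Qed.

Lemma Fm_tan s0 t0 s t : Sq s0 -> Sq t0 -> Sq s -> Sq t ->
  Fm s0 t0 + Fms s0 t0 * (s - s0) + Fmt s0 t0 * (t - t0) <= Fm s t.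
Proof.
move=> /S_bd[hs0 hs0'] /S_bd[ht0 ht0'] /S_bd[hs hs'] /S_bd[ht ht'].
have J1 := j1; have J2 := j2; have L1 := l1; have L2 := l2.
rewrite -subr_ge0.
have -> : Fm s t - (Fm s0 t0 + Fms s0 t0 * (s - s0) + Fmt s0 t0 * (t - t0)) =
  (6 - t ^+ 2 - l * t) * (s - s0) ^+ 2 + (- ((2 * s0 + j) * (t0 + t + l))) * ((s - s0) * (t - t0))
  + (6 - s0 ^+ 2 - j * s0) * (t - t0) ^+ 2.
  by rewrite /Fm /Fms /Fmt; ring.
have [c1 c2] : 0 <= t0 + t + l /\ t0 + t + l <= 3 by split; lra.
have [b1 b2] := qb3 j1 j2 hs0 hs0'.
have f1 : 19/4 <= 6 - t ^+ 2 - l * t.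
  have h1 : 0 <= l * (2^-1 - t) by rewrite mulr_ge0 //; lra.
  have h3 : 0 <= (t + 2^-1) * (2^-1 - t) by rewrite mulr_ge0 //; lra.
  rewrite expr2; lra.
have f2 : 19/4 <= 6 - s0 ^+ 2 - j * s0.
  have h1 : 0 <= j * (2^-1 - s0) by rewrite mulr_ge0 //; lra.
  have h3 : 0 <= (s0 + 2^-1) * (2^-1 - s0) by rewrite mulr_ge0 //; lra.
  rewrite expr2; lra.
have [d1 d2] := prod_bd b1 b2 c1 c2.
have n9 : (3 * 3 : R) = 9 by rewrite -natrM.
apply: quad => //; apply/andP; split.
  by rewrite lerN2 -n9.
by apply: le_trans (_ : 0 <= 9); rewrite ?oppr_le0.
Qed.

Lemma qb2 {c s : R} : 1 <= c -> c <= 2 -> -(2^-1) <= s -> s <= 2^-1 ->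
  19/4 <= - s ^+ 2 - c * s + 6 /\ - s ^+ 2 - c * s + 6 <= 7.
Proof.
move=> c1 c2 s1 s2.
have h1 : 0 <= c * (s + 2^-1) by rewrite mulr_ge0 //; lra.
have h2 : 0 <= c * (2^-1 - s) by rewrite mulr_ge0 //; lra.
have h3 : 0 <= (s + 2^-1) * (2^-1 - s) by rewrite mulr_ge0 //; lra.
have h4 : 0 <= s ^+ 2 by rewrite sqr_ge0.
rewrite expr2; split; lra.
Qed.

Lemma Fp_bds s t : Sq s -> Sq t ->
  [/\ 0 <= Fps s t <= 25, 0 <= Fpt s t <= 25 & `|Fp s t| <= 100].
Proof.
move=> /S_bd[hs hs'] /S_bd[ht ht'].
have J1 := j1; have J2 := j2; have L1 := l1; have L2 := l2.
have [a1 a2] := qb1 j1 j2 hs hs'.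
have [b1 b2] := qb1 l1 l2 ht ht'.
have [c1 c2] := qb3 j1 j2 hs hs'.
have [d1 d2] := qb3 l1 l2 ht ht'.
have a0 : 0 <= s ^+ 2 + j * s + 6 by lra.
have b0 : 0 <= t ^+ 2 + l * t + 6 by lra.
have [e1 e2] := prod_bd c1 c2 b0 b2.
have [f1 f2] := prod_bd a0 a2 d1 d2.
have [g1 g2] := prod_bd a0 a2 b0 b2.
rewrite /Fps /Fpt /Fp ger0_norm //; split; try apply/andP; try split; lra.
Qed.

Lemma Fm_bds s t : Sq s -> Sq t ->
  [/\ 0 <= Fms s t <= 25, 0 <= Fmt s t <= 25 & `|Fm s t| <= 100].
Proof.
move=> /S_bd[hs hs'] /S_bd[ht ht'].
have J1 := j1; have J2 := j2; have L1 := l1; have L2 := l2.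
have [a1 a2] := qb2 j1 j2 hs hs'.
have [b1 b2] := qb2 l1 l2 ht ht'.
have [c1 c2] := qb3 j1 j2 hs hs'.
have [d1 d2] := qb3 l1 l2 ht ht'.
have a0 : 0 <= - s ^+ 2 - j * s + 6 by lra.
have b0 : 0 <= - t ^+ 2 - l * t + 6 by lra.
have [e1 e2] := prod_bd c1 c2 b0 b2.
have [f1 f2] := prod_bd a0 a2 d1 d2.
have [g1 g2] := prod_bd a0 a2 b0 b2.
have -> : Fmt s t = (- s ^+ 2 - j * s + 6) * (2 * t + l) by rewrite /Fmt; ring.
have -> : Fm s t = - ((- s ^+ 2 - j * s + 6) * (- t ^+ 2 - l * t + 6)) by rewrite /Fm; ring.
rewrite /Fms normrN ger0_norm //; split; try apply/andP; try split; lra.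
Qed.

Lemma mq1 (D : set R) (f : R -> R) (c b : R) : measurable_fun D f ->
  measurable_fun D (fun t => f t ^+ 2 + c * f t + b).
Proof.
move=> mf; apply: measurable_funD; last exact: measurable_cst.
apply: measurable_funD; first exact: measurable_funX.
by apply: measurable_funM => //; exact: measurable_cst.
Qed.

Lemma mq2 (D : set R) (f : R -> R) (c b : R) : measurable_fun D f ->
  measurable_fun D (fun t => - f t ^+ 2 - c * f t + b).
Proof.
move=> mf; apply: measurable_funD; last exact: measurable_cst.
apply: measurable_funB; first exact: measurable_funN (measurable_funX _ mf).
by apply: measurable_funM => //; exact: measurable_cst.
Qed.

Lemma mq3 (D : set R) (f : R -> R) (c b : R) : measurable_fun D f ->
  measurable_fun D (fun t => f t ^+ 2 + c * f t - b).
Proof.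
move=> mf; apply: measurable_funB; last exact: measurable_cst.
apply: measurable_funD; first exact: measurable_funX.
by apply: measurable_funM => //; exact: measurable_cst.
Qed.

Lemma Fp_meas (D : set R) (f g : R -> R) : measurable_fun D f -> measurable_fun D g ->
  measurable_fun D (fun t => Fp (f t) (g t)).
Proof. by move=> mf mg; rewrite /Fp; apply: measurable_funM; [exact: mq1|exact: mq1]. Qed.

Lemma Fm_meas (D : set R) (f g : R -> R) : measurable_fun D f -> measurable_fun D g ->
  measurable_fun D (fun t => Fm (f t) (g t)).
Proof. by move=> mf mg; rewrite /Fm; apply: measurable_funM; [exact: mq3|exact: mq2]. Qed.

End Poly.

End Helpers.

Section Gen.
Import numFieldNormedType.Exports.
Context {R : realType} {k : nat}.

Lemma circle_cont (a b : 'rV[R[i]]_k) (t0 d : R) : 0 < d ->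
  \forall t \near t0, cdist (a + expi t *: b) (a + expi t0 *: b) < d.
Proof.
move=> d0.
pose M := \big[Num.max/0]_(j < k) cabs (b ord0 j).
have M0 : 0 <= M by apply: bm_ge0 => j; exact: cabs_ge0.
pose eta := d / (M + 1).
have M1 : 0 < M + 1 by lra.
have eta0 : 0 < eta by rewrite divr_gt0.
have eta2 : 0 < eta / 2 by rewrite divr_gt0.
have Hc := (cvgrPdist_lt _ _).1 (@continuous_cos R t0) _ eta2.
have Hs := (cvgrPdist_lt _ _).1 (@continuous_sin R t0) _ eta2.
near=> t.
have h1 : `|cos t0 - cos t| < eta / 2 by near: t; exact: Hc.
have h2 : `|sin t0 - sin t| < eta / 2 by near: t; exact: Hs.
apply: bm_lt => // j; rewrite !mxE.
have -> : a ord0 j + expi t * b ord0 j - (a ord0 j + expi t0 * b ord0 j)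
   = (expi t - expi t0) * b ord0 j by ring.
rewrite cabsM.
have hE : cabs (expi t - expi t0) <= `|cos t - cos t0| + `|sin t - sin t0|.
  exact: (cabs_le (cos t - cos t0) (sin t - sin t0)).
have hb : cabs (b ord0 j) <= M by exact: (bm_ge (fun j => cabs (b ord0 j)) j).
rewrite distrC in h1; rewrite distrC in h2.
have h3 : cabs (expi t - expi t0) <= eta by lra.
apply: le_lt_trans (_ : eta * M < d).
  by apply: ler_pM => //; exact: cabs_ge0.
rewrite /eta mulrAC ltr_pdivrMr // mulrDr mulr1 ltrDl //.
Unshelve. all: by end_near.
Qed.

Lemma circle_meas (D : set 'rV[R[i]]_k) (u : 'rV[R[i]]_k -> R) a b :
  usc_on D u -> (forall t, D (a + expi t *: b)) ->
  measurable_fun (`[0%R, (2 * pi)%R]%classic) (fun t => u (a + expi t *: b)).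
Proof.
move=> hu hD.
have lsc : lower_semicontinuous (fun t : R => (- u (a + expi t *: b))%:E).
  move=> x r; rewrite lte_fin => hr.
  have e0 : 0 < - u (a + expi x *: b) - r by lra.
  have [d d0 hd] := hu _ (hD x) _ e0.
  exists (fun t : R => cdist (a + expi t *: b) (a + expi x *: b) < d).
    exact: circle_cont.
  move=> y /= hy; rewrite lte_fin; have := hd _ (hD y) hy; lra.
have hm := (@measurable_EFinP _ _ _ setT (fun t => - u (a + expi t *: b))).1
  (lower_semicontinuous_measurable lsc).
apply: (measurable_funS _ (@subsetT _ _)) => //.
have -> : (fun t => u (a + expi t *: b)) = \- (fun t => - u (a + expi t *: b)).
  by apply/funext => t /=; rewrite opprK.
exact: measurable_funN.
Qed.

End Gen.

Section Gen2.
Import numFieldNormedType.Exports.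
Context {R : realType} {k : nat}.

Local Notation I := (`[0%R, (2 * pi)%R]%classic : set R).
Local Notation mu := (@lebesgue_measure R).

Lemma mI : measurable I.
Proof. exact: measurable_itv. Qed.

Lemma muI : mu I = (2 * pi)%:E.
Proof.
rewrite lebesgue_measure_itv /= lte_fin mulr_gt0 ?pi_gt0 //.
by rewrite oppr0 adde0.
Qed.

Lemma intg (f : R -> R) (M : R) : measurable_fun I f -> (forall t, -M <= f t <= M) ->
  mu.-integrable I (EFin \o f).
Proof.
move=> mf bf; apply: (measurable_bounded_integrable (mu:=mu) mI) => //.
  have h : forall x : \bar R, x = (2 * pi)%:E -> (x < +oo)%E by move=> x ->; exact: ltry.
  by apply: h; exact: muI.
exists M; split; first exact: num_real.
move=> N hN t _ /=; apply: le_trans (ltW hN).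
by rewrite ler_norml.
Qed.

Lemma finI (f : R -> R) : mu.-integrable I (EFin \o f) ->
  (\int[mu]_(t in I) (f t)%:E)%E = (Rintegral mu I f)%:E.
Proof. by move=> hf; rewrite fineK // integrable_fin_num //; exact: mI. Qed.

End Gen2.

Section Gen3.
Import numFieldNormedType.Exports.
Context {R : realType} {k : nat}.
Local Notation I := (`[0%R, (2 * pi)%R]%classic : set R).
Local Notation mu := (@lebesgue_measure R).

Lemma psh_gen (D : set 'rV[R[i]]_k) (phi psi : 'rV[R[i]]_k -> R)
  (F Fs Ft : R -> R -> R) :
  psh_on D phi -> psh_on D psi ->
  (forall z, D z -> Sq (phi z)) -> (forall z, D z -> Sq (psi z)) ->
  (forall s0 t0 s t, Sq s0 -> Sq t0 -> Sq s -> Sq t ->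
     F s0 t0 + Fs s0 t0 * (s - s0) + Ft s0 t0 * (t - t0) <= F s t) ->
  (forall s t, Sq s -> Sq t ->
     [/\ 0 <= Fs s t <= 25, 0 <= Ft s t <= 25 & `|F s t| <= 100]) ->
  (forall f g : R -> R, measurable_fun I f -> measurable_fun I g ->
     measurable_fun I (fun t => F (f t) (g t))) ->
  psh_on (prodset D) (fun x => F (phi (lsubmx x)) (psi (rsubmx x))).
Proof.
move=> [uphi mphi] [upsi mpsi] bphi bpsi htan hbd hFm; split.
  move=> x [Dl Dr] e e0.
  have e1 : 0 < e / 100 by rewrite divr_gt0.
  have [d1 d10 h1] := uphi _ Dl _ e1.
  have [d2 d20 h2] := upsi _ Dr _ e1.
  exists (Num.min d1 d2); first by rewrite lt_min d10 d20.
  move=> w [Dwl Dwr] hw.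
  have hw1 : cdist (lsubmx w) (lsubmx x) < d1.
    apply: le_lt_trans (cdist_l w x) _; apply: lt_le_trans hw _.
    by rewrite ge_min lexx.
  have hw2 : cdist (rsubmx w) (rsubmx x) < d2.
    apply: le_lt_trans (cdist_r w x) _; apply: lt_le_trans hw _.
    by rewrite ge_min lexx orbT.
  have p1 := h1 _ Dwl hw1; have p2 := h2 _ Dwr hw2.
  have ht := htan _ _ _ _ (bphi _ Dwl) (bpsi _ Dwr) (bphi _ Dl) (bpsi _ Dr).
  have [/andP[s0 s25] /andP[t0 t25] _] := hbd _ _ (bphi _ Dwl) (bpsi _ Dwr).
  set p' := phi (lsubmx w) in p1 ht s0 s25 t0 t25 *.
  set q' := psi (rsubmx w) in p2 ht s0 s25 t0 t25 *.
  set p := phi (lsubmx x) in p1 ht *.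
  set q := psi (rsubmx x) in p2 ht *.
  have k1 : Fs p' q' * (p' - p) <= 25 * (e / 100).
    apply: le_trans (_ : Fs p' q' * (e / 100) <= _).
      by apply: ler_wpM2l => //; lra.
    by apply: ler_wpM2r => //; exact: ltW.
  have k2 : Ft p' q' * (q' - q) <= 25 * (e / 100).
    apply: le_trans (_ : Ft p' q' * (e / 100) <= _).
      by apply: ler_wpM2l => //; lra.
    by apply: ler_wpM2r => //; exact: ltW.
  lra.
move=> a b hdisc.
pose la := lsubmx a; pose lb := lsubmx b; pose ra := rsubmx a; pose rb := rsubmx b.
have hdl : forall z, cabs z <= 1 -> D (la + z *: lb).
  by move=> z /hdisc [h _]; rewrite /la /lb -lsub_lin.
have hdr : forall z, cabs z <= 1 -> D (ra + z *: rb).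
  by move=> z /hdisc [_ h]; rewrite /ra /rb -rsub_lin.
have DP : forall t, D (la + expi t *: lb) by move=> t; apply: hdl; rewrite cabs_expi.
have DQ : forall t, D (ra + expi t *: rb) by move=> t; apply: hdr; rewrite cabs_expi.
pose P := fun t => phi (la + expi t *: lb).
pose Q := fun t => psi (ra + expi t *: rb).
have mP : measurable_fun I P := @circle_meas R k D phi la lb uphi DP.
have mQ : measurable_fun I Q := @circle_meas R k D psi ra rb upsi DQ.
have SP : forall t, Sq (P t) := fun t => bphi _ (DP t).
have SQ : forall t, Sq (Q t) := fun t => bpsi _ (DQ t).
have SPb : forall t, -(2^-1) <= P t <= 2^-1 by move=> t; rewrite -ler_norml; exact: SP.
have SQb : forall t, -(2^-1) <= Q t <= 2^-1 by move=> t; rewrite -ler_norml; exact: SQ.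
have iP : mu.-integrable I (EFin \o P) := intg P (2^-1) mP SPb.
have iQ : mu.-integrable I (EFin \o Q) := intg Q (2^-1) mQ SQb.
have iF : mu.-integrable I (EFin \o (fun t => F (P t) (Q t))).
  apply: (intg _ 100); first exact: hFm.
  by move=> t; rewrite -ler_norml; have [_ _ ->] := hbd _ _ (SP t) (SQ t).
have mP0 : ((phi la)%:E <= ((2 * pi)^-1)%:E * (\int[mu]_(t in I) (P t)%:E))%E := mphi la lb hdl.
have mQ0 : ((psi ra)%:E <= ((2 * pi)^-1)%:E * (\int[mu]_(t in I) (Q t)%:E))%E := mpsi ra rb hdr.
rewrite (finI _ iP) -EFinM lee_fin in mP0.
rewrite (finI _ iQ) -EFinM lee_fin in mQ0.
have -> : (\int[mu]_(t in I) ((fun x => F (phi (lsubmx x)) (psi (rsubmx x))) (a + expi t *: b))%:E)%E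
   = (\int[mu]_(t in I) (F (P t) (Q t))%:E)%E.
  by apply: eq_integral => t _; rewrite /P /Q /la /lb /ra /rb lsub_lin rsub_lin.
rewrite (finI _ iF) -EFinM lee_fin.
change (F (phi la) (psi ra) <= (2 * pi)^-1 * Rintegral mu I (fun t => F (P t) (Q t))).
have c0 : cabs (0 : R[i]) <= 1 by rewrite /cabs /= expr0n /= addr0 sqrtr0 ler01.
have Dla : D la by have := hdl 0 c0; rewrite scale0r addr0.
have Dra : D ra by have := hdr 0 c0; rewrite scale0r addr0.
have Sp0 := bphi _ Dla; have Sq0 := bpsi _ Dra.
have [/andP[a0 a25] /andP[b0 b25] _] := hbd _ _ Sp0 Sq0.
move: Sp0 Sq0 a0 a25 b0 b25 mP0 mQ0.
set p0 := phi la; set q0 := psi ra; set al := Fs p0 q0; set be := Ft p0 q0.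
move=> Sp0 Sq0 a0 a25 b0 b25 mP0 mQ0.
have haP : forall t, `|al * P t| <= 25.
  move=> t; rewrite normrM (ger0_norm a0).
  apply: le_trans (ler_pM a0 (normr_ge0 _) a25 (SP t)) _; lra.
have hbQ : forall t, `|be * Q t| <= 25.
  move=> t; rewrite normrM (ger0_norm b0).
  apply: le_trans (ler_pM b0 (normr_ge0 _) b25 (SQ t)) _; lra.
pose ka := F p0 q0 - al * p0 - be * q0.
have iK : mu.-integrable I (EFin \o (fun _ => ka)).
  apply: (intg _ `|ka|); first exact: measurable_cst.
  by move=> _; rewrite -ler_norml.
have iaP : mu.-integrable I (EFin \o (fun t => al * P t)).
  apply: (intg _ 25); first by apply: measurable_funM => //; exact: measurable_cst.
  by move=> t; rewrite -ler_norml.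
have ibQ : mu.-integrable I (EFin \o (fun t => be * Q t)).
  apply: (intg _ 25); first by apply: measurable_funM => //; exact: measurable_cst.
  by move=> t; rewrite -ler_norml.
have mPQ : measurable_fun I (fun t => al * P t + be * Q t).
  by apply: measurable_funD; apply: measurable_funM => //; exact: measurable_cst.
have bPQ : forall t, `|al * P t + be * Q t| <= 50.
  move=> t; apply: le_trans (ler_normD _ _) _.
  have := haP t; have := hbQ t; lra.
have iPQ : mu.-integrable I (EFin \o (fun t => al * P t + be * Q t)).
  by apply: (intg _ 50) => // t; rewrite -ler_norml.
have iL : mu.-integrable I (EFin \o (fun t => ka + (al * P t + be * Q t))).
  apply: (intg _ (`|ka| + 50)).
    by apply: measurable_funD => //; exact: measurable_cst.
  move=> t; rewrite -ler_norml; apply: le_trans (ler_normD _ _) _.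
  by rewrite lerD2l.
have hL : Rintegral mu I (fun t => ka + (al * P t + be * Q t))
    <= Rintegral mu I (fun t => F (P t) (Q t)).
  apply: (le_Rintegral _ iL iF); first exact: mI.
  move=> t _; have := htan _ _ _ _ Sp0 Sq0 (SP t) (SQ t).
  rewrite /ka -/al -/be; lra.
have E1 : Rintegral mu I (fun t => ka + (al * P t + be * Q t))
    = ka * (2 * pi) + (al * Rintegral mu I P + be * Rintegral mu I Q).
  rewrite (RintegralD _ iK iPQ); last exact: mI.
  rewrite (RintegralD _ iaP ibQ); last exact: mI.
  rewrite (RintegralZl al _ iP); last exact: mI.
  rewrite (RintegralZl be _ iQ); last exact: mI.
  rewrite Rintegral_cst; last exact: mI.
  have h : forall x : \bar R, x = (2 * pi)%:E -> fine x = 2 * pi by move=> x ->.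
  by rewrite (_ : fine _ = 2 * pi) //; apply: h; exact: muI.
have pi0 : 0 < 2 * pi :> R by rewrite mulr_gt0 ?pi_gt0.
have hc : (2 * pi)^-1 * (2 * pi) = 1 :> R by rewrite mulVf // gt_eqF.
have cc0 : 0 <= (2 * pi)^-1 :> R by rewrite invr_ge0 ltW.
move: E1 hL mP0 mQ0.
set c := (2 * pi)^-1.
set RP := Rintegral mu I P; set RQ := Rintegral mu I Q.
set RF := Rintegral mu I (fun t => F (P t) (Q t)).
set RL := Rintegral mu I _.
move=> E1 hL mP0 mQ0.
have s1 : c * RL <= c * RF by apply: ler_wpM2l.
have s2 : c * RL = ka + al * (c * RP) + be * (c * RQ).
  rewrite E1; transitivity (ka * (c * (2 * pi)) + al * (c * RP) + be * (c * RQ)).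
    by ring.
  by rewrite hc mulr1.
have s3 : al * p0 <= al * (c * RP) by apply: ler_wpM2l.
have s4 : be * q0 <= be * (c * RQ) by apply: ler_wpM2l.
rewrite /ka in s2.
lra.
Qed.

End Gen3.

Lemma mem12 (R : realType) (j : nat) : j \in [:: 1%N; 2%N] -> 1 <= (j%:R : R) /\ (j%:R : R) <= 2.
Proof. by rewrite !inE => /orP[] /eqP ->; rewrite ?lexx ?ler1n ?ler_nat. Qed.

Theorem lemma3p1 (R : realType) (k : nat) (D : set 'rV[R[i]]_k)
    (phi psi : 'rV[R[i]]_k -> R) :
  copen D ->
  psh_on D phi -> psh_on D psi ->
  (forall z, D z -> `|phi z| <= 2^-1) ->
  (forall z, D z -> `|psi z| <= 2^-1) ->
  forall j l : nat, (j \in [:: 1%N; 2%N]) -> (l \in [:: 1%N; 2%N]) ->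
    let phip := fun z => phi z ^+ 2 + j%:R * phi z + 6 in
    let phim := fun z => phi z ^+ 2 + j%:R * phi z - 6 in
    let psip := fun w => psi w ^+ 2 + l%:R * psi w + 6 in
    let psim := fun w => - psi w ^+ 2 - l%:R * psi w + 6 in
    psh_on (prodset D) (tensorf phip psip) /\
    psh_on (prodset D) (tensorf phim psim).
Proof.
move=> _ hphi hpsi bphi bpsi j l /(mem12 R) [j1 j2] /(mem12 R) [l1 l2] /=.
split.
  have H := @psh_gen R k D phi psi _ _ _ hphi hpsi bphi bpsi (@Fp_tan R _ _ j1 j2 l1 l2) (@Fp_bds R _ _ j1 j2 l1 l2)
           (@Fp_meas R j%:R l%:R _).
  exact H.
have H := @psh_gen R k D phi psi _ _ _ hphi hpsi bphi bpsi (@Fm_tan R _ _ j1 j2 l1 l2) (@Fm_bds R _ _ j1 j2 l1 l2)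
         (@Fm_meas R j%:R l%:R _).
exact H.
Qed.
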